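(* Let $p$ be an odd prime and let $q\in\mathbb{C}_p$ satisfy $|1-q|_p<p^{-1/(p-1)}$. Then for every integer $n\ge 0$, $$\sum_{j=0}^{p-1}(-1)^j[j]_q^n\equiv \frac{2}{[2]_q}E_{n,q}\pmod{[p]_q},$$ i.e. $\left|\frac{2}{[2]_q}E_{n,q}-\sum_{j=0}^{p-1}(-1)^j[j]_q^n\right|_p\le |[p]_q|_p$.
   Context: $\mathbb{C}_p$ is the completion of an algebraic closure of $\mathbb{Q}_p$, with absolute value $|\cdot|_p$ normalized by $|p|_p=1/p$. For $x\in\mathbb{Z}_p$ put $[x]_q=\frac{1-q^x}{1-q}$ and $[x]_{-q}=\frac{1-(-q)^x}{1+q}$. For a function $f$ on $\mathbb{Z}_p$ the fermionic $p$-adic $q$-integral is $\int_{\mathbb{Z}_p}f(x)\,d\mu_{-q}(x)=\lim_{N\to\infty}\frac{1}{[p^N]_{-q}}\sum_{x=0}^{p^N-1}f(x)(-q)^x$. The $q$-Euler numbers are $E_{n,q}=\int_{\mathbb{Z}_p}[x]_q^n q^{-x}\,d\mu_{-q}(x)$; equivalently $\frac{2}{[2]_q}E_{n,q}=\lim_{N\to\infty}\sum_{x=0}^{p^N-1}(-1)^x[x]_q^n$. (They satisfy $E_{0,q}=[2]_q/2$ and $(qE+1)^n+E_{n,q}=[2]_q\delta_{0,n}$, with $E^k$ replaced by $E_{k,q}$ after expansion.) For $a,b,m\in\mathbb{C}_p$, $a\equiv b \pmod m$ means $|a-b|_p\le|m|_p$. *)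

(* Defs.v *)
From Stdlib Require Import Reals.
From HB Require Import structures.
From mathcomp Require Import all_boot all_order all_algebra.
Set Implicit Arguments. Unset Strict Implicit. Unset Printing Implicit Defensive.
Import GRing.Theory.
Local Open Scope ring_scope.

Definition is_ultra_abs (K : fieldType) (abs : K -> R) : Prop :=
  (forall x, Rle R0 (abs x)) /\
  (forall x, abs x = R0 <-> x = 0) /\
  (forall x y, abs (x * y) = Rmult (abs x) (abs y)) /\
  (forall x y, Rle (abs (x + y)) (Rmax (abs x) (abs y))).

Definition converges_to (K : fieldType) (abs : K -> R) (u : nat -> K) (l : K) : Prop :=
  forall eps : R, Rlt R0 eps ->
    exists N0 : nat, forall N : nat, (N0 <= N)%N -> Rlt (abs (u N - l)) eps.

Definition cauchy_seq (K : fieldType) (abs : K -> R) (u : nat -> K) : Prop :=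
  forall eps : R, Rlt R0 eps ->
    exists N0 : nat, forall m n : nat, (N0 <= m)%N -> (N0 <= n)%N ->
      Rlt (abs (u m - u n)) eps.

Definition algebraic_over_Q (K : fieldType) (x : K) : Prop :=
  exists P : {poly int}, P != 0 /\ root (map_poly intr P) x.

(* (K, abs) is (an isometric copy of) C_p: K is algebraically closed,
   abs is a nonarchimedean absolute value restricting to the normalized
   p-adic absolute value on the integers (|p| = 1/p), K is complete, and
   the elements algebraic over Q are dense (so K is the completion of an
   algebraic closure of Q_p). *)
Definition is_Cp (p : nat) (K : closedFieldType) (abs : K -> R) : Prop :=
  is_ultra_abs abs /\
  (forall n : nat, (0 < n)%N ->
     abs (n%:R) = pow (Rinv (INR p)) (logn p n)) /\
  (forall u : nat -> K, cauchy_seq abs u -> exists l, converges_to abs u l) /\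
  (forall (x : K) (eps : R), Rlt R0 eps ->
     exists y : K, algebraic_over_Q y /\ Rlt (abs (x - y)) eps).

Definition qint (K : fieldType) (q : K) (x : nat) : K :=
  if q == 1 then x%:R else (1 - q ^+ x) / (1 - q).

Definition qnint (K : fieldType) (q : K) (x : nat) : K :=
  (1 - (- q) ^+ x) / (1 + q).

(* Riemann sums of the fermionic p-adic q-integral:
   (1/[p^N]_{-q}) * sum_{x=0}^{p^N-1} f(x) (-q)^x. *)
Definition ferm_sum (K : fieldType) (p : nat) (q : K) (f : nat -> K) (N : nat) : K :=
  (qnint q (p ^ N))^-1 * \sum_(x < p ^ N) f x * (- q) ^+ x.

(* The integrand defining E_{n,q}: [x]_q^n q^{-x}. *)
Definition qeuler_integrand (K : fieldType) (q : K) (n : nat) (x : nat) : K :=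
  qint q x ^+ n * (q ^+ x)^-1.

(* Main.v *)
Require Import Defs.
From Stdlib Require Import Reals Lra Lia.
From HB Require Import structures.
From mathcomp Require Import all_boot all_order all_algebra.
Import GRing.Theory.
Set Implicit Arguments. Unset Strict Implicit. Unset Printing Implicit Defensive.
Local Open Scope ring_scope.

Section RealLemmas.
Local Open Scope R_scope.

Lemma pow_le1 x n : 0 <= x <= 1 -> x ^ n <= 1.
Proof. intros H; induction n; simpl; nra. Qed.
Lemma pow_ge0' x n : 0 <= x -> 0 <= x ^ n.
Proof. intros H; induction n; simpl; nra. Qed.
Lemma pow_lt_strict x y n : 0 <= x -> x < y -> (0 < n)%coq_nat -> x ^ n < y ^ n.
Proof.
  intros H0 H1 Hn. induction n as [|n IH]; [lia|].
  destruct n as [|n]; simpl in *; [lra|].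
  assert (A: x ^ S n < y ^ S n) by (apply IH; lia).
  assert (B: 0 <= x ^ S n) by (apply pow_ge0'; lra).
  simpl in A, B. nra.
Qed.
Lemma pow_le_inv x n : 0 <= x <= 1 -> (1 <= n)%coq_nat -> x ^ n <= x.
Proof.
  intros H Hn. destruct n as [|n]; [lia|]. simpl.
  assert (x ^ n <= 1) by (apply pow_le1; lra). nra.
Qed.
Lemma max_eps_le a b : 0 <= b -> (forall e, 0 < e -> a <= Rmax e b) -> a <= b.
Proof.
  intros Hb H. destruct (Rle_dec a b) as [|Hn]; [auto|].
  assert (Hab : b < a) by lra.
  specialize (H ((a - b)/2) ltac:(lra)).
  unfold Rmax in H; destruct (Rle_dec _ _); lra.
Qed.

End RealLemmas.

Section Abs.
Variable K : fieldType.
Variable abs : K -> R.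
Hypothesis hU : is_ultra_abs abs.

Lemma abs_ge0 x : Rle R0 (abs x). Proof. by case: hU. Qed.
Lemma abs_eq0 x : abs x = R0 <-> x = 0. Proof. by case: hU => _ []. Qed.
Lemma absM x y : abs (x * y) = Rmult (abs x) (abs y). Proof. by case: hU => _ [] _ []. Qed.
Lemma absD x y : Rle (abs (x + y)) (Rmax (abs x) (abs y)). Proof. by case: hU => _ [] _ []. Qed.
Lemma abs0 : abs 0 = R0. Proof. by apply/abs_eq0. Qed.
Lemma abs1 : abs 1 = R1.
Proof.
  have h := absM 1 1; rewrite mulr1 in h.
  have h1 : abs 1 <> R0 by move/abs_eq0; apply/eqP; exact: oner_neq0.
  have := abs_ge0 1. nra.
Qed.
Lemma absN1 : abs (-1) = R1.
Proof.
  have h := absM (-1) (-1); rewrite mulrNN mulr1 abs1 in h.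
  have := abs_ge0 (-1). nra.
Qed.
Lemma absN x : abs (- x) = abs x.
Proof. by rewrite -mulN1r absM absN1 Rmult_1_l. Qed.
Lemma absX x n : abs (x ^+ n) = pow (abs x) n.
Proof. elim: n => [|n IH]; first by rewrite expr0 abs1. by rewrite exprS absM IH. Qed.
Lemma absV x : x != 0 -> abs (x^-1) = Rinv (abs x).
Proof.
  move=> hx. have h := absM x x^-1. rewrite mulfV // abs1 in h.
  have h1 : abs x <> R0 by move/abs_eq0=> e; rewrite e eqxx in hx.
  field_simplify_eq; [lra| exact h1].
Qed.
Lemma absB x y : abs (x - y) = abs (y - x).
Proof. by rewrite -opprB absN. Qed.

Definition bnd x := Rle (abs x) R1.
Lemma bnd0 : bnd 0. Proof. rewrite /bnd abs0; lra. Qed.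
Lemma bnd1 : bnd 1. Proof. rewrite /bnd abs1; lra. Qed.
Lemma bndN1 : bnd (-1). Proof. rewrite /bnd absN1; lra. Qed.
Lemma bndM x y : bnd x -> bnd y -> bnd (x * y).
Proof. rewrite /bnd absM => h1 h2; have := abs_ge0 x; have := abs_ge0 y; nra. Qed.
Lemma bndD x y : bnd x -> bnd y -> bnd (x + y).
Proof. rewrite /bnd => h1 h2; have := absD x y; unfold Rmax; case: Rle_dec; lra. Qed.
Lemma bndN x : bnd x -> bnd (- x). Proof. by rewrite /bnd absN. Qed.
Lemma bndX x n : bnd x -> bnd (x ^+ n).
Proof. move=> h; elim: n => [|n IH]; [exact: bnd1| rewrite exprS; exact: bndM]. Qed.
Lemma bnd_sum (I : Type) (r : seq I) (P : pred I) (F : I -> K) :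
  (forall i, P i -> bnd (F i)) -> bnd (\sum_(i <- r | P i) F i).
Proof.
  move=> h. apply: (big_ind bnd); [exact: bnd0| exact: bndD| exact: h].
Qed.

Lemma abs_sum_le (I : Type) (r : seq I) (P : pred I) (F : I -> K) (B : R) :
  Rle R0 B -> (forall i, P i -> Rle (abs (F i)) B) -> Rle (abs (\sum_(i <- r | P i) F i)) B.
Proof.
  move=> hB h. apply: (big_ind (fun x => Rle (abs x) B)).
  - by rewrite abs0.
  - move=> x y hx hy; have := absD x y; unfold Rmax; case: Rle_dec; lra.
  - exact: h.
Qed.

Definition mdiv c x := exists r, bnd r /\ x = c * r.
Lemma mdiv0 c : mdiv c 0. Proof. by exists 0; split; [exact: bnd0| rewrite mulr0]. Qed.
Lemma mdivD c x y : mdiv c x -> mdiv c y -> mdiv c (x + y).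
Proof. move=> [r [hr ->]] [s [hs ->]]; exists (r + s); split; [exact: bndD| by rewrite mulrDr]. Qed.
Lemma mdivN c x : mdiv c x -> mdiv c (- x).
Proof. move=> [r [hr ->]]; exists (- r); split; [exact: bndN| by rewrite mulrN]. Qed.
Lemma mdivB c x y : mdiv c x -> mdiv c y -> mdiv c (x - y).
Proof. by move=> h1 h2; apply: mdivD => //; apply: mdivN. Qed.
Lemma mdivMr c x y : mdiv c x -> bnd y -> mdiv c (x * y).
Proof. move=> [r [hr ->]] hy; exists (r * y); split; [exact: bndM| by rewrite mulrA]. Qed.
Lemma mdivMl c x y : mdiv c x -> bnd y -> mdiv c (y * x).
Proof. by rewrite mulrC; apply: mdivMr. Qed.
Lemma mdiv_self c y : bnd y -> mdiv c (c * y).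
Proof. by move=> h; exists y. Qed.
Lemma mdiv_sum c (I : Type) (r : seq I) (P : pred I) (F : I -> K) :
  (forall i, P i -> mdiv c (F i)) -> mdiv c (\sum_(i <- r | P i) F i).
Proof.
  move=> h. apply: (big_ind (mdiv c)); [exact: mdiv0| exact: mdivD| exact: h].
Qed.
Lemma mdiv_trans c d x : mdiv (c * d) x -> bnd d -> mdiv c x.
Proof. move=> [r [hr ->]] hd; exists (d * r); split; [exact: bndM| by rewrite mulrA]. Qed.
Lemma mdiv_le c x : mdiv c x -> Rle (abs x) (abs c).
Proof. move=> [r [hr ->]]; rewrite absM; move: hr; rewrite /bnd=> hr; have := abs_ge0 c; have := abs_ge0 r; nra. Qed.

Lemma powD_mdiv x c y n : bnd x -> bnd c -> bnd y -> mdiv c ((x + c * y) ^+ n - x ^+ n).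
Proof.
  move=> hx hc hy. rewrite subrXX (_ : x + c * y - x = c * y); last by rewrite addrC addKr.
  rewrite -mulrA. apply: mdiv_self. apply: bndM => //.
  apply: bnd_sum => i _; apply: bndM; apply: bndX => //; apply: bndD => //; exact: bndM.
Qed.

End Abs.


Definition g (K : fieldType) (r : K) (x : nat) : K := \sum_(i < x) r ^+ i.
Definition Fs (K : fieldType) (r : K) (n k : nat) : K := \sum_(x < k) (-1) ^+ x * g r x ^+ n.

Section G.
Variable K : fieldType.

Lemma g_addn (r : K) a k : g r (a + k) = g r a + r ^+ a * g r k.
Proof.
  rewrite /g big_split_ord /= mulr_sumr; congr (_ + _); apply: eq_bigr => i _ /=.
  by rewrite exprD.
Qed.
Lemma g_muln (r : K) b c : g r (b * c) = g r b * g (r ^+ b) c.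
Proof.
  elim: c => [|c IH]; first by rewrite muln0 /g !big_ord0 mulr0.
  rewrite mulnS addnC g_addn IH /g big_ord_recr /= mulrDr; congr (_ + _).
  by rewrite mulrC exprM.
Qed.
Lemma g_add (r : K) a b c : g r (a + b * c) = g r a + r ^+ a * g r b * g (r ^+ b) c.
Proof. by rewrite g_addn g_muln mulrA. Qed.
Lemma qint_g (r : K) x : qint r x = g r x.
Proof.
  rewrite /qint /g; case: eqP => [->|/eqP h].
  - by rewrite (eq_bigr (fun _ => 1)) ?sumr_const ?card_ord // => i _; rewrite expr1n.
  - have h1 : 1 - r != 0 by rewrite subr_eq0 eq_sym.
    apply: (mulfI h1); rewrite mulrC divfK //.
    by rewrite -opprB subrX1 -mulNr opprB.
Qed.
Lemma sum_sign m : \sum_(y < m) (-1) ^+ y = (odd m)%:R :> K.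
Proof.
  elim: m => [|m IH]; first by rewrite big_ord0.
  rewrite big_ord_recr /= IH -signr_odd /=; case: (odd m) => /=.
  - by rewrite expr1 subrr.
  - by rewrite expr0 add0r.
Qed.

Variable abs : K -> R.
Hypothesis hU : is_ultra_abs abs.

Lemma g_bnd r x : bnd abs r -> bnd abs (g r x).
Proof. move=> h; apply: (bnd_sum hU) => i _; exact: (bndX hU). Qed.

Lemma decomp (r : K) n b m : odd b -> bnd abs r ->
  mdiv abs (g r b) (Fs r n (m * b) - (odd m)%:R * Fs r n b).
Proof.
  move=> hb hr. elim: m => [|m IH].
  - by rewrite mul0n /Fs big_ord0 mul0r subrr; apply: (mdiv0 hU).
  - rewrite mulSnr /Fs big_split_ord /= -/(Fs r n (m * b)).
    rewrite -(sum_sign m.+1) big_ord_recr /= (sum_sign m) mulrDl -/(Fs r n b).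
    have -> : Fs r n (m * b) + \sum_(i < b) (-1) ^+ (m * b + i) * g r (m * b + i) ^+ n -
        ((odd m)%:R * Fs r n b + (-1) ^+ m * Fs r n b)
      = (Fs r n (m * b) - (odd m)%:R * Fs r n b) +
        \sum_(i < b) ((-1) ^+ (m * b + i) * g r (m * b + i) ^+ n - (-1) ^+ m * ((-1) ^+ i * g r i ^+ n)).
      rewrite big_split /= sumrN -mulr_sumr -/(Fs r n b).
      by rewrite opprD addrACA.
    apply: (mdivD hU); first exact IH.
    apply (mdiv_sum hU) => //= i _.
    rewrite addnC mulnC g_add exprD exprM.
    have -> : (-1) ^+ b = -1 :> K by rewrite -signr_odd hb expr1.
    rewrite mulrA (mulrC ((-1) ^+ m) ((-1) ^+ i)) -mulrBr.
    apply: (mdivMl hU); last by apply: (bndM hU); apply: (bndX hU); exact: (bndN1 hU).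
    rewrite (mulrC (r ^+ i)) -mulrA. apply: (powD_mdiv hU) => //; try exact: g_bnd.
    apply: (bndM hU) => //; [exact: (bndX hU) | apply: g_bnd => //; exact: (bndX hU)].
Qed.
End G.


Section P.
Variable K : fieldType.
Variable abs : K -> R.
Hypothesis hU : is_ultra_abs abs.
Variable p : nat.
Hypothesis hp : prime p.
Hypothesis hodd : odd p.
Hypothesis hN : forall n : nat, (0 < n)%N -> abs (n%:R) = pow (Rinv (INR p)) (logn p n).

Lemma p_ge3 : (3 <= p)%N.
Proof.
  have h2 := prime_gt1 hp. case: p hp hodd h2 => [|[|[|q]]] //.
Qed.
Lemma invp_bounds : Rlt R0 (Rinv (INR p)) /\ Rlt (Rinv (INR p)) R1.
Proof.
  have h : Rle (INR 3) (INR p) by apply: le_INR; apply/leP; exact: p_ge3.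
  simpl in h. have e : Rmult (Rinv (INR p)) (INR p) = R1 by field; lra.
  have : Rlt R0 (Rinv (INR p)) by apply: Rinv_0_lt_compat; lra.
  split; nra.
Qed.
Lemma bnd_nat m : bnd abs (m%:R).
Proof.
  rewrite /bnd. case: m => [|m]; first by rewrite (abs0 hU); lra.
  rewrite hN //. have := invp_bounds. move=> [h1 h2]. apply: pow_le1; lra.
Qed.
Lemma abs_nat_dvd m : (p %| m)%N -> Rle (abs (m%:R)) (Rinv (INR p)).
Proof.
  have [h1 h2] := invp_bounds.
  case: m => [|m] hd; first by rewrite (abs0 hU); lra.
  rewrite hN //. apply: pow_le_inv; first lra.
  apply/leP. rewrite logn_gt0 mem_primes hp hd. done.
Qed.
Lemma abs2 : abs (2%:R) = R1.
Proof.
  rewrite hN //. have -> : logn p 2 = 0%N.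
    apply/eqP; rewrite -leqn0 leqNgt logn_gt0 mem_primes hp /=.
    apply/negP => hd. by have := leq_trans p_ge3 (dvdn_leq (isT : (0 < 2)%N) hd).
  done.
Qed.

Definition small (r : K) := Rlt (pow (abs (1 - r)) p.-1) (Rinv (INR p)).

Lemma small_lt1 r : small r -> Rlt (abs (1 - r)) R1.
Proof.
  rewrite /small => h. have [h1 h2] := invp_bounds.
  destruct (Rlt_le_dec (abs (1 - r)) R1) as [|h3]; first done.
  have := pow_R1_Rle _ (p.-1) h3. lra.
Qed.
Lemma small_bnd r : small r -> bnd abs r.
Proof.
  move=> h. have e : r = 1 - (1 - r) by rewrite opprB addrC subrK.
  rewrite /bnd e.
  have h5 : Rle (abs (1 - (1 - r))) (Rmax R1 (abs (1 - r))).
    by have := absD hU 1 (- (1 - r)); rewrite (absN hU) (abs1 hU).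
  have h4 : Rlt (abs (1 - r)) R1 := small_lt1 h.
  move: h5; unfold Rmax; case: Rle_dec => ? ?; lra.
Qed.

Lemma unit_lem u : Rlt (abs (1 - u)) R1 -> 1 + u != 0 /\ bnd abs (1 + u)^-1.
Proof.
  move=> h. have e : (2%:R : K) = (1 + u) + (1 - u) by rewrite addrACA subrr addr0.
  have h2 := absD hU (1 + u) (1 - u). rewrite -e abs2 in h2.
  have h3 : Rle R1 (abs (1 + u)) by move: h2; unfold Rmax; case: Rle_dec; lra.
  have hnz : 1 + u != 0.
    apply/eqP => e1; rewrite e1 (abs0 hU) in h3; lra.
  split => //. rewrite /bnd (absV hU hnz).
  have e2 : Rmult (Rinv (abs (1 + u))) (abs (1 + u)) = R1 by field; lra.
  have : Rlt R0 (Rinv (abs (1 + u))) by apply: Rinv_0_lt_compat; lra.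
  nra.
Qed.

Lemma g_one m : g (1 : K) m = m%:R.
Proof. by rewrite -qint_g /qint eqxx. Qed.

Lemma gp_le r : small r -> Rle (abs (g r p)) (Rinv (INR p)).
Proof.
  move=> hs. have [hi1 hi2] := invp_bounds.
  have hlt := small_lt1 hs.
  set t := r - 1.
  have ht : abs t = abs (1 - r) by rewrite /t (absB hU).
  have er : r = t + 1 by rewrite /t subrK.
  have eH : g r p = \sum_(i < p) t ^+ i *+ 'C(p, i.+1).
    case: (eqVneq t 0) => ht0.
    - have -> : r = 1 by rewrite er ht0 add0r.
      rewrite g_one. case: p hp => [//|p'] _.
      rewrite big_ord_recl /= expr0 bin1 big1 ?addr0 //.
      by move=> i _; rewrite ht0 /bump /= add1n expr0n mul0rn.
    - apply: (mulfI ht0). rewrite /g -subrX1 -/t {1}er exprD1n big_ord_recl /= expr0 bin0.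
      rewrite addrAC subrr add0r mulr_sumr; apply: eq_bigr => i _.
      by rewrite /bump /= add1n exprS mulrnAr.
  rewrite eH. apply: (abs_sum_le hU); first lra.
  move=> i _. rewrite -mulr_natr (absM hU) (absX hU).
  have hi := ltn_ord i.
  have hta : Rle R0 (abs t) := abs_ge0 hU t.
  case: (ltnP i.+1 p) => hip.
  - have h1 : Rle (abs ('C(p, i.+1))%:R) (Rinv (INR p)).
      apply: abs_nat_dvd; apply: prime_dvd_bin => //; by rewrite hip.
    have h2 : Rle (pow (abs t) i) R1 by apply: pow_le1; lra.
    have h3 : Rle R0 (pow (abs t) i) by apply: pow_ge0'.
    have h4 : Rle R0 (abs ('C(p, i.+1))%:R) := abs_ge0 hU _.
    nra.
  - have ei : i.+1 = p by apply/eqP; rewrite eqn_leq hi hip.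
    rewrite ei binn (abs1 hU) Rmult_1_r.
    have e1 : p.-1 = i := esym (congr1 predn ei).
    have hs' := hs; rewrite /small e1 in hs'.
    rewrite ht; apply: Rlt_le; exact: hs'.
Qed.

Lemma small_pow r : small r -> small (r ^+ p).
Proof.
  move=> hs. have [hi1 hi2] := invp_bounds.
  have h1 := gp_le hs.
  have e : 1 - r ^+ p = (1 - r) * g r p by rewrite /g -opprB subrX1 -mulNr opprB.
  have h2 : Rle (abs (1 - r ^+ p)) (abs (1 - r)).
    rewrite e (absM hU). have := abs_ge0 hU (1 - r). have := abs_ge0 hU (g r p). nra.
  rewrite /small. apply: Rle_lt_trans hs. apply: pow_incr. split => //; exact: abs_ge0.
Qed.

Lemma gpN_le N r : small r -> Rle (abs (g r (p ^ N))) (pow (Rinv (INR p)) N).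
Proof.
  elim: N r => [|N IH] r hs.
  - rewrite expn0 /g big_ord1 expr0 (abs1 hU) /=; lra.
  - rewrite expnS g_muln (absM hU) /=.
    have h1 := gp_le hs. have h2 := IH _ (small_pow hs).
    have := abs_ge0 hU (g r p). have := abs_ge0 hU (g (r ^+ p) (p ^ N)). nra.
Qed.
End P.


Lemma rpow_small (pn : nat) (a : R) : (3 <= pn)%N -> Rle R0 a ->
  Rlt a (Rpower (INR pn) (Ropp (Rinv (Rminus (INR pn) R1)))) ->
  Rlt (pow a pn.-1) (Rinv (INR pn)).
Proof.
  move=> h3 ha hlt.
  have hI : Rle (INR 3) (INR pn) by apply: le_INR; apply/leP.
  simpl in hI.
  have hpos : Rlt R0 (Rpower (INR pn) (Ropp (Rinv (Rminus (INR pn) R1)))) by apply: exp_pos.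
  have e1 : INR pn.-1 = Rminus (INR pn) R1.
    by rewrite -{2}(prednK (leq_trans (isT : (0 < 3)%N) h3)) S_INR; lra.
  have e : pow (Rpower (INR pn) (Ropp (Rinv (Rminus (INR pn) R1)))) pn.-1 = Rinv (INR pn).
    rewrite -Rpower_pow // Rpower_mult e1.
    have -> : Rmult (Ropp (Rinv (Rminus (INR pn) R1))) (Rminus (INR pn) R1) = Ropp R1 by field; lra.
    rewrite Rpower_Ropp Rpower_1 //; lra.
  rewrite -e. apply: pow_lt_strict => //.
  apply/ltP; by rewrite -subn1 subn_gt0; apply: leq_trans h3.
Qed.

Lemma telescope (K : fieldType) (abs : K -> R) (hU : is_ultra_abs abs) (u : nat -> K) (x : R) N0 :
  Rle R0 x -> Rle x R1 ->
  (forall k, Rle (abs (u k.+1 - u k)) (pow x k)) ->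
  forall d, Rle (abs (u (N0 + d)%N - u N0)) (pow x N0).
Proof.
  move=> hx0 hx1 h. elim => [|d IH].
  - rewrite addn0 subrr (abs0 hU). exact: pow_ge0'.
  - have e : u (N0 + d.+1)%N - u N0 = (u (N0 + d).+1 - u (N0 + d)%N) + (u (N0 + d)%N - u N0).
      by rewrite addnS addrA subrK.
    have h1 : Rle (pow x (N0 + d)) (pow x N0).
      have e2 : pow x (N0 + d) = Rmult (pow x N0) (pow x d) := pow_add x N0 d.
      rewrite e2. have := @pow_ge0' x N0 hx0. have : Rle (pow x d) R1 by apply: pow_le1; lra.
      nra.
    have h2 := h (N0 + d)%N.
    have h3 : Rle (abs (u (N0 + d.+1)%N - u N0))
       (Rmax (abs (u (N0 + d).+1 - u (N0 + d)%N)) (abs (u (N0 + d)%N - u N0))).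
      by rewrite e; apply: absD.
    move: h3; unfold Rmax; case: Rle_dec => ? ?; lra.
Qed.

Unset Implicit Arguments.
Theorem theorem1 (p : nat) (K : closedFieldType) (abs : K -> R)
    (hp : prime p) (hodd : odd p) (hK : is_Cp p abs)
    (q : K) (hq : Rlt (abs (1 - q)) (Rpower (INR p) (Ropp (Rinv (Rminus (INR p) R1)))))
    (n : nat) :
  exists E : K,
    converges_to abs (ferm_sum p q (qeuler_integrand q n)) E /\
    Rle (abs (2%:R / qint q 2 * E - \sum_(j < p) (-1) ^+ j * qint q j ^+ n))
        (abs (qint q p)).
Proof.
  move: hK => [hU [hN [hC _]]].
  have hs : small abs p q.
    apply: rpow_small => //; [exact: p_ge3 | exact: abs_ge0].
  have [hi1 hi2] := invp_bounds hp hodd.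
  have hlt := small_lt1 hp hodd hs.
  have hqb := small_bnd hU hp hodd hs.
  have h1q : bnd abs (1 - q) by apply: Rlt_le; exact: hlt.
  have [nz1q bi1q] := unit_lem hU hp hodd hN hlt.
  have hg m : 1 - q ^+ m = (1 - q) * g q m by rewrite /g -opprB subrX1 -mulNr opprB.
  have hu m : Rlt (abs (1 - q ^+ (p ^ m))) R1.
    rewrite hg (absM hU). have := abs_ge0 hU (1 - q). have := abs_ge0 hU (g q (p ^ m)).
    have : Rle (abs (g q (p ^ m))) R1 := g_bnd hU _ hqb.
    have : Rlt (abs (1 - q)) R1 := hlt. nra.
  have q2 : qint q 2 = 1 + q by rewrite qint_g /g !big_ord_recl big_ord0 /= expr0 expr1 addr0.
  set c := 2%:R / qint q 2.
  set s := ferm_sum p q (qeuler_integrand q n).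
  set F := fun N => Fs q n (p ^ N).
  have hq0 : q != 0.
    apply/eqP => e0; move: hlt; rewrite e0 subr0 (abs1 hU); lra.
  have hun N : 1 + q ^+ (p ^ N) != 0 /\ bnd abs (1 + q ^+ (p ^ N))^-1 by exact (unit_lem hU hp hodd hN (hu N)).
  have hT N : c * s N = 2%:R / (1 + q ^+ (p ^ N)) * F N.
    have [nzu biu] := hun N.
    have esum : \sum_(x < p ^ N) qeuler_integrand q n x * (- q) ^+ x = F N.
      rewrite /F /Fs; apply: eq_bigr => x _.
      rewrite /qeuler_integrand qint_g -[- q]mulN1r exprMn (mulrC ((-1) ^+ x)) mulrA mulfVK ?expf_neq0 //.
      by rewrite mulrC.
    have eq : qnint q (p ^ N) = (1 + q ^+ (p ^ N)) / (1 + q).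
      rewrite /qnint -[- q]mulN1r exprMn -signr_odd oddX hodd orbT expr1 mulN1r opprK //.
    rewrite /s /ferm_sum esum eq invf_div /c q2 !mulrA divfK //.
  have hFb N : bnd abs (F N) by apply: (bnd_sum hU) => x _; apply: (bndM hU); [apply: (bndX hU); exact: (bndN1 hU)| apply: (bndX hU); exact: (g_bnd hU)].
  have hTF N : mdiv abs (g q (p ^ N)) (c * s N - F N).
    have [nzu biu] := hun N.
    have e1 : 2%:R / (1 + q ^+ (p ^ N)) - 1 = (1 - q ^+ (p ^ N)) / (1 + q ^+ (p ^ N)).
      rewrite -[X in _ - X = _](divff nzu) -mulrBl; congr (_ / _).
      by rewrite mulrS mulr1n opprD addrACA subrr add0r.
    rewrite hT -[X in _ - X]mul1r -mulrBl e1 hg -!mulrA.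
    rewrite mulrCA. apply: mdiv_self. apply: (bndM hU); [exact: h1q | apply: (bndM hU) => //].
  have hFF N : mdiv abs (g q (p ^ N)) (F N.+1 - F N).
    have hb : odd (p ^ N) by rewrite oddX hodd orbT.
    have := decomp hU (b:=p ^ N) n p hb hqb; rewrite hodd mul1r.
    by rewrite /F expnS.
  have hgN N : g q (p ^ N.+1) = g q (p ^ N) * g (q ^+ (p ^ N)) p by rewrite expnSr g_muln.
  have hg1 N : g q (p ^ N.+1) = g q p * g (q ^+ p) (p ^ N) by rewrite expnS g_muln.
  have hTT N : mdiv abs (g q (p ^ N)) (c * s N.+1 - c * s N).
    have e : c * s N.+1 - c * s N = (c * s N.+1 - F N.+1) + (F N.+1 - F N) - (c * s N - F N).
      by rewrite addrA subrK opprB addrA subrK.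
    rewrite e. apply: (mdivB hU) => //. apply: (mdivD hU) => //.
    apply: (mdiv_trans hU (d := g (q ^+ (p ^ N)) p)); first by rewrite -hgN.
    apply: (g_bnd hU); exact: (bndX hU).
  have h2nz : (2%:R : K) != 0.
    apply/eqP => e0. have := abs2 hp hodd hN. rewrite e0 (abs0 hU). lra.
  have hcnz : c != 0 by rewrite /c q2 mulf_neq0 // invr_eq0.
  have hci : bnd abs c^-1.
    rewrite /c invf_div q2. apply: (bndM hU); first by apply: (bndD hU) => //; exact: (bnd1 hU).
    rewrite /bnd (absV hU h2nz) (abs2 hp hodd hN) Rinv_1; lra.
  have hcb : bnd abs c.
    rewrite /c q2. apply: (bndM hU) => //. exact: (bnd_nat hU hp hodd hN).
  have hsd N : Rle (abs (s N.+1 - s N)) (pow (Rinv (INR p)) N).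
    have e : s N.+1 - s N = c^-1 * (c * s N.+1 - c * s N) by rewrite -mulrBr mulKf.
    apply: Rle_trans (gpN_le hU hp hodd hN N hs).
    apply: (mdiv_le hU). rewrite e. exact: (mdivMl hU).
  have hx0 : Rle R0 (Rinv (INR p)) by lra.
  have hx1 : Rle (Rinv (INR p)) R1 by lra.
  have htel N1 := @telescope _ _ hU s _ N1 hx0 hx1 hsd.
  have hcs : cauchy_seq abs s.
    move=> eps heps.
    have hab : Rlt (Rabs (Rinv (INR p))) R1 by rewrite Rabs_pos_eq //.
    have [N1 HN1] := pow_lt_1_zero _ hab _ heps.
    exists N1 => m k hm hk.
    have hpw : Rlt (pow (Rinv (INR p)) N1) eps.
      have := HN1 N1 (le_n _). rewrite Rabs_pos_eq //. exact: pow_ge0'.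
    have hm' := htel N1 (m - N1)%N. rewrite subnKC // in hm'.
    have hk' := htel N1 (k - N1)%N. rewrite subnKC // in hk'.
    have e : s m - s k = (s m - s N1) + - (s k - s N1) by rewrite opprB addrA subrK.
    have hD : Rle (abs (s m - s k)) (Rmax (abs (s m - s N1)) (abs (s k - s N1))).
      by rewrite e -(absN hU (s k - s N1)); apply: absD.
    move: hD; unfold Rmax; case: Rle_dec => ? ?; lra.
  have [E hE] := hC s hcs.
  exists E; split => //.
  have hS : \sum_(j < p) (-1) ^+ j * qint q j ^+ n = Fs q n p.
    by apply: eq_bigr => j _; rewrite qint_g.
  rewrite hS qint_g.
  apply: max_eps_le; first exact: abs_ge0.
  move=> e he.
  have [N0 HN0] := hE e he.
  have hN1 := HN0 N0.+1 (leqnSn N0).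
  have hFS : mdiv abs (g q p) (F N0.+1 - Fs q n p).
    have hb : odd (p ^ N0) by rewrite oddX hodd orbT.
    have := decomp hU (b:=p) n (p ^ N0) hodd hqb; rewrite hb mul1r.
    by rewrite /F expnSr.
  have hTS : mdiv abs (g q p) (c * s N0.+1 - Fs q n p).
    have e1 : c * s N0.+1 - Fs q n p = (c * s N0.+1 - F N0.+1) + (F N0.+1 - Fs q n p).
      by rewrite addrA subrK.
    rewrite e1; apply: (mdivD hU) => //.
    apply: (mdiv_trans hU (d := g (q ^+ p) (p ^ N0))); first by rewrite -hg1.
    apply: (g_bnd hU); exact: (bndX hU).
  have h1 : Rle (abs (c * s N0.+1 - Fs q n p)) (abs (g q p)) := mdiv_le hU hTS.
  have h2 : Rlt (abs (c * (E - s N0.+1))) e.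
    have h3 : abs (c * (E - s N0.+1)) = Rmult (abs c) (abs (s N0.+1 - E)) by rewrite (absM hU) (absB hU).
    rewrite h3.
    have : Rle R0 (abs c) := abs_ge0 hU c. have : Rle R0 (abs (s N0.+1 - E)) := abs_ge0 hU _.
    have : Rle (abs c) R1 := hcb. have : Rlt (abs (s N0.+1 - E)) e := hN1. nra.
  have e2 : c * E - Fs q n p = c * (E - s N0.+1) + (c * s N0.+1 - Fs q n p).
    by rewrite mulrBr addrA subrK.
  have hD : Rle (abs (c * E - Fs q n p)) (Rmax (abs (c * (E - s N0.+1))) (abs (c * s N0.+1 - Fs q n p))).
    by rewrite e2; apply: absD.
  apply: (Rle_trans _ _ _ hD). apply: Rmax_lub.
  - apply: Rle_trans (Rmax_l e _). exact: Rlt_le h2.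
  - apply: Rle_trans (Rmax_r e _). exact: h1.
Qed.
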